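(* Let $d\ge2$, let $G$ be a germ and let $\mathcal{Q}_G$ be the (nonempty) set of all qplexes containing $G$. Define the stem $\mathscr{S}(G)=\bigcap_{Q\in\mathcal{Q}_G}Q$ and envelope $\mathscr{E}(G)=\bigcup_{Q\in\mathcal{Q}_G}Q$. Then $$\mathscr{S}(G)=\overline{\mathrm{conv}}(\Delta_{\rm e}\cup B_{\rm i}\cup G),\qquad \mathscr{E}(G)=\Delta\cap B_{\rm o}\cap G^*,$$ and $\mathscr{S}(G)$ and $\mathscr{E}(G)$ are mutually polar: $\mathscr{S}(G)^*=\mathscr{E}(G)$ and $\mathscr{E}(G)^*=\mathscr{S}(G)$. In particular (taking $G=\emptyset$) the intersection of all qplexes is $\overline{\mathrm{conv}}(\Delta_{\rm e}\cup B_{\rm i})$ and the union of all qplexes is $\Delta\cap B_{\rm o}$.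
   Context: Fix an integer $d\ge 2$. $\langle\cdot,\cdot\rangle$ is the standard inner product on $\mathbb{R}^{d^2}$, $\|\cdot\|$ the Euclidean norm. $\Delta=\{p\in\mathbb{R}^{d^2}: p(i)\ge0,\ \sum_ip(i)=1\}$; $H=\{u\in\mathbb{R}^{d^2}:\sum_i u(i)=1\}$; $c=(1/d^2,\dots,1/d^2)$. $\overline{\mathrm{conv}}(X)$ denotes the closed convex hull. For $A\subseteq H$ the polar is $A^*=\{u\in H:\langle u,v\rangle\ge\frac{1}{d(d+1)}\ \forall v\in A\}$. Out-ball: $B_{\rm o}=\{u\in H:\|u-c\|\le r_{\rm o}\}$, $r_{\rm o}^2=\frac{d-1}{d^2(d+1)}$. In-ball: $B_{\rm i}=\{u\in H:\|u-c\|\le r_{\rm i}\}$, $r_{\rm i}^2=\frac{1}{d^2(d^2-1)}$. Basis distributions: $e_k(i)=\frac{1}{d+1}(\delta_{ki}+\frac1d)$, $k=1,\dots,d^2$; basis simplex $\Delta_{\rm e}=\mathrm{conv}\{e_1,\dots,e_{d^2}\}$. A subset $A\subseteq\Delta$ is a germ if $\frac{1}{d(d+1)}\le\langle p,s\rangle\le\frac{2}{d(d+1)}$ for all $p,s\in A$. A qplex is a set $Q\subseteq\Delta\cap B_{\rm o}$ with $Q^*=Q$ (equivalently, a maximal germ). *)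

(* Defs.v *)
(* classical reals. Points of R^{d^2} are represented as
   functions nat -> R; only coordinates 0 .. d^2-1 are ever inspected. *)
From Stdlib Require Import Reals.
Open Scope R_scope.

Fixpoint sumN (n : nat) (f : nat -> R) : R :=
  match n with O => 0 | S m => sumN m f + f m end.

Definition vec := nat -> R.
Definition rset := vec -> Prop.

Section QDefs.
Variable d : nat.

Definition Ndim : nat := (d * d)%nat.
Definition dR : R := INR d.

Definition ip (u v : vec) : R := sumN Ndim (fun i => u i * v i).
Definition dist2 (u v : vec) : R := sumN Ndim (fun i => (u i - v i) ^ 2).

Definition inH (u : vec) : Prop := sumN Ndim u = 1.
Definition Simplex (u : vec) : Prop :=
  (forall i, (i < Ndim)%nat -> 0 <= u i) /\ inH u.
Definition cpt : vec := fun _ => 1 / (dR * dR).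

Definition ro2 : R := (dR - 1) / (dR * dR * (dR + 1)).
Definition ri2 : R := 1 / (dR * dR * (dR * dR - 1)).
Definition Bout (u : vec) : Prop := inH u /\ dist2 u cpt <= ro2.
Definition Bin (u : vec) : Prop := inH u /\ dist2 u cpt <= ri2.

Definition ebasis (k : nat) : vec :=
  fun i => / (dR + 1) * ((if Nat.eqb k i then 1 else 0) + / dR).
Definition isBasisVec (u : vec) : Prop :=
  exists k, (k < Ndim)%nat /\ forall i, (i < Ndim)%nat -> u i = ebasis k i.

Definition conv (A : rset) (u : vec) : Prop :=
  exists (n : nat) (x : nat -> vec) (lam : nat -> R),
    (forall j, (j < n)%nat -> A (x j) /\ 0 <= lam j) /\
    sumN n lam = 1 /\
    forall i, (i < Ndim)%nat -> u i = sumN n (fun j => lam j * x j i).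

Definition closure (A : rset) (u : vec) : Prop :=
  forall eps, 0 < eps -> exists v, A v /\ dist2 u v < eps.

Definition clconv (A : rset) : rset := closure (conv A).

Definition BasisSimplex : rset := conv isBasisVec.

Definition polar (A : rset) (u : vec) : Prop :=
  inH u /\ forall v, A v -> ip u v >= 1 / (dR * (dR + 1)).

Definition seteq (A B : rset) : Prop := forall u, A u <-> B u.
Definition subset (A B : rset) : Prop := forall u, A u -> B u.
Definition union (A B : rset) : rset := fun u => A u \/ B u.

Definition germ (A : rset) : Prop :=
  subset A Simplex /\
  forall p s, A p -> A s ->
    1 / (dR * (dR + 1)) <= ip p s /\ ip p s <= 2 / (dR * (dR + 1)).

Definition qplex (Q : rset) : Prop :=
  subset Q (fun u => Simplex u /\ Bout u) /\ seteq (polar Q) Q.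

Definition stem (G : rset) : rset :=
  fun u => forall Q, qplex Q -> subset G Q -> Q u.
Definition envelope (G : rset) : rset :=
  fun u => exists Q, qplex Q /\ subset G Q /\ Q u.

Definition emptyset : rset := fun _ => False.
End QDefs.

(* Main.v *)
Require Import Defs.
From Stdlib Require Import Reals Lra Lia Psatz Classical FunctionalExtensionality PropExtensionality.
From mathcomp Require classical_sets.
Open Scope R_scope.

Lemma sumN_ext n f g : (forall i, (i < n)%nat -> f i = g i) -> sumN n f = sumN n g.
Proof. induction n; cbn [sumN]; intros H; auto. rewrite IHn by (intros; apply H; lia). rewrite H by lia. auto. Qed.

Lemma sumN_lin n a b f g : sumN n (fun i => a * f i + b * g i) = a * sumN n f + b * sumN n g.
Proof. induction n; cbn [sumN]. ring. rewrite IHn. ring. Qed.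

Lemma sumN_scal n a f : sumN n (fun i => a * f i) = a * sumN n f.
Proof. induction n; cbn [sumN]. ring. rewrite IHn. ring. Qed.

Lemma sumN_plus n f g : sumN n (fun i => f i + g i) = sumN n f + sumN n g.
Proof. induction n; cbn [sumN]. ring. rewrite IHn. ring. Qed.

Lemma sumN_minus n f g : sumN n (fun i => f i - g i) = sumN n f - sumN n g.
Proof. induction n; cbn [sumN]. ring. rewrite IHn. ring. Qed.

Lemma sumN_const n a : sumN n (fun _ => a) = INR n * a.
Proof. induction n; cbn [sumN]. simpl; ring. rewrite IHn, S_INR. ring. Qed.

Lemma sumN_nonneg n f : (forall i, (i < n)%nat -> 0 <= f i) -> 0 <= sumN n f.
Proof. induction n; cbn [sumN]; intros H. lra. assert (0 <= f n) by (apply H; lia).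
 assert (0 <= sumN n f) by (apply IHn; intros; apply H; lia). lra. Qed.

Lemma sumN_le n f g : (forall i, (i < n)%nat -> f i <= g i) -> sumN n f <= sumN n g.
Proof. induction n; cbn [sumN]; intros H. lra. assert (f n <= g n) by (apply H; lia).
 assert (sumN n f <= sumN n g) by (apply IHn; intros; apply H; lia). lra. Qed.

Lemma sumN_swap n m (f : nat -> nat -> R) :
  sumN n (fun i => sumN m (fun j => f i j)) = sumN m (fun j => sumN n (fun i => f i j)).
Proof. induction n; cbn [sumN]. rewrite sumN_const; simpl; ring.
 rewrite IHn. rewrite <- sumN_plus. reflexivity. Qed.

Lemma sumN_ind n k (f : nat -> R) : (k < n)%nat ->
  sumN n (fun i => (if Nat.eqb k i then 1 else 0) * f i) = f k.
Proof. induction n; intros H. lia. simpl.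
 destruct (Nat.eq_dec k n) as [->|ne].
 - rewrite Nat.eqb_refl. rewrite (sumN_ext n _ (fun _ => 0)).
   rewrite sumN_const; ring. intros i Hi. replace (Nat.eqb n i) with false. ring.
   symmetry; apply Nat.eqb_neq; lia.
 - rewrite IHn by lia. replace (Nat.eqb k n) with false. ring. symmetry; apply Nat.eqb_neq; lia. Qed.

Lemma sumN_sq_le n f : (forall i, (i < n)%nat -> 0 <= f i) ->
  sumN n (fun i => f i ^ 2) <= (sumN n f) ^ 2.
Proof. induction n; cbn [sumN]; intros H. lra.
 assert (0 <= f n) by (apply H; lia).
 assert (0 <= sumN n f) by (apply sumN_nonneg; intros; apply H; lia).
 assert (sumN n (fun i => f i ^ 2) <= (sumN n f) ^2) by (apply IHn; intros; apply H; lia).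
 nra. Qed.

Lemma quad_disc A B C : 0 <= C -> (forall l, 0 <= A - 2 * l * B + l ^ 2 * C) -> B ^ 2 <= A * C.
Proof. intros HC H.
 destruct (Rlt_dec 0 C) as [Cp|Cn].
 - specialize (H (B / C)). 
   replace (A - 2 * (B / C) * B + (B / C) ^ 2 * C) with ((A * C - B^2) / C) in H by (field; lra).
   assert (0 <= A * C - B ^ 2). { apply Rmult_le_reg_r with (/ C). apply Rinv_0_lt_compat; lra.
     rewrite Rmult_0_l. exact H. } lra.
 - assert (C = 0) by lra. subst C.
   destruct (Req_dec B 0) as [->|nB]. nra.
   specialize (H ((A + 1) / (2 * B))).
   replace (A - 2 * ((A + 1) / (2 * B)) * B + ((A + 1) / (2 * B)) ^ 2 * 0) with (-1) in H by (field; auto). lra.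
Qed.

Lemma CS n a b : (sumN n (fun i => a i * b i)) ^ 2 <= sumN n (fun i => a i ^ 2) * sumN n (fun i => b i ^ 2).
Proof. apply quad_disc. apply sumN_nonneg; intros; apply pow2_ge_0.
 intros l.
 assert (E: sumN n (fun i => (a i - l * b i)^2) = sumN n (fun i => a i^2) - 2*l*sumN n (fun i => a i * b i) + l^2 * sumN n (fun i => b i^2)).
 { induction n; cbn [sumN]; [ring | rewrite IHn; ring]. }
 rewrite <- E. apply sumN_nonneg; intros; apply pow2_ge_0.
Qed.


Lemma dR_ge2 d : (2 <= d)%nat -> 2 <= dR d.
Proof. intros h. unfold dR. apply le_INR in h. simpl in h. lra. Qed.

Lemma INR_N d : INR (Ndim d) = dR d * dR d.
Proof. unfold Ndim, dR. apply mult_INR. Qed.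

Lemma ip_sym d u v : ip d u v = ip d v u.
Proof. unfold ip. apply sumN_ext; intros; ring. Qed.

Lemma sum_sq_shift n f c : sumN n (fun i => (f i - c) ^ 2) =
  sumN n (fun i => f i * f i) - 2 * c * sumN n f + INR n * c ^ 2.
Proof. induction n; cbn [sumN]. simpl; ring. rewrite IHn, S_INR. ring. Qed.

Lemma sum_prod_shift n f g c : sumN n (fun i => (f i - c) * (g i - c)) =
  sumN n (fun i => f i * g i) - c * sumN n f - c * sumN n g + INR n * c ^ 2.
Proof. induction n; cbn [sumN]. simpl; ring. rewrite IHn, S_INR. ring. Qed.

Lemma dist_ip d u : (2 <= d)%nat -> inH d u -> dist2 d u (cpt d) = ip d u u - 1 / (dR d * dR d).
Proof. intros h H. assert (2 <= dR d) by (apply dR_ge2; auto).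
 unfold dist2, ip, cpt. rewrite sum_sq_shift. unfold inH in H. rewrite H, INR_N. field. lra. Qed.

Lemma ip_center d u v : (2 <= d)%nat -> inH d u -> inH d v ->
  ip d u v = 1 / (dR d * dR d) + sumN (Ndim d) (fun i => (u i - cpt d i) * (v i - cpt d i)).
Proof. intros h Hu Hv. assert (2 <= dR d) by (apply dR_ge2; auto).
 unfold cpt. rewrite sum_prod_shift. unfold inH in Hu, Hv. rewrite Hu, Hv, INR_N. unfold ip. field. lra. Qed.

Lemma amgm1 n y z : 2 * sumN n (fun i => y i * z i) <= sumN n (fun i => y i ^ 2) + sumN n (fun i => z i ^ 2).
Proof. assert (E: sumN n (fun i => y i ^ 2) + sumN n (fun i => z i ^ 2) - 2 * sumN n (fun i => y i * z i)
   = sumN n (fun i => (y i - z i) ^ 2)).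
 { induction n; cbn [sumN]; [ring | rewrite <- IHn; ring]. }
 assert (0 <= sumN n (fun i => (y i - z i) ^ 2)) by (apply sumN_nonneg; intros; apply pow2_ge_0). lra. Qed.

Lemma amgm2 n y z a : 0 < a -> - (2 * sumN n (fun i => y i * z i)) <= a * sumN n (fun i => y i ^ 2) + / a * sumN n (fun i => z i ^ 2).
Proof. intros Ha. assert (E: a * sumN n (fun i => y i ^ 2) + / a * sumN n (fun i => z i ^ 2) + 2 * sumN n (fun i => y i * z i)
   = sumN n (fun i => / a * (a * y i + z i) ^ 2)).
 { induction n; cbn [sumN]. ring. rewrite <- IHn. field. lra. }
 assert (0 <= sumN n (fun i => / a * (a * y i + z i) ^ 2)).
 { apply sumN_nonneg; intros. apply Rmult_le_pos. left; apply Rinv_0_lt_compat; auto. apply pow2_ge_0. } lra. Qed.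

Lemma dist2_eq d u v : dist2 d u v = sumN (Ndim d) (fun i => (u i - v i) ^ 2).
Proof. reflexivity. Qed.

Lemma bout_bout d x p : (2 <= d)%nat -> Bout d x -> Bout d p -> ip d x p <= 2 / (dR d * (dR d + 1)).
Proof. intros h [Hx Dx] [Hp Dp]. assert (2 <= dR d) by (apply dR_ge2; auto).
 rewrite (ip_center d) by auto. unfold dist2 in Dx, Dp.
 pose proof (amgm1 (Ndim d) (fun i => x i - cpt d i) (fun i => p i - cpt d i)) as A. cbv beta in A.
 unfold ro2 in *.
 assert (E: 2 / (dR d * (dR d + 1)) = 1 / (dR d * dR d) + (dR d - 1) / (dR d * dR d * (dR d + 1))) by (field; lra).
 rewrite E. lra. Qed.

Lemma bin_bout d b p : (2 <= d)%nat -> Bin d b -> Bout d p -> ip d b p >= 1 / (dR d * (dR d + 1)).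
Proof. intros h [Hb Db] [Hp Dp]. assert (2 <= dR d) by (apply dR_ge2; auto).
 rewrite (ip_center d) by auto. unfold dist2 in Db, Dp.
 pose proof (amgm2 (Ndim d) (fun i => b i - cpt d i) (fun i => p i - cpt d i) (dR d - 1 )) as A. cbv beta in A.
 assert (A': - (2 * sumN (Ndim d) (fun i : nat => (b i - cpt d i) * (p i - cpt d i))) <=
     (dR d - 1) * ri2 d + / (dR d - 1) * ro2 d).
 { eapply Rle_trans. apply A. lra. apply Rplus_le_compat.
   apply Rmult_le_compat_l; lra. apply Rmult_le_compat_l. left; apply Rinv_0_lt_compat; lra. lra. }
 unfold ri2, ro2 in A'.
 assert (E: (dR d - 1) * (1 / (dR d * dR d * (dR d * dR d - 1))) + / (dR d - 1) * ((dR d - 1) / (dR d * dR d * (dR d + 1)))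
   = 2 * (1 / (dR d * dR d) - 1 / (dR d * (dR d + 1)))).
 { assert (dR d - 1 <> 0) by lra. assert (dR d * dR d - 1 <> 0) by nra. assert (dR d <> 0) by lra. assert (dR d + 1 <> 0) by lra. field. repeat split; auto. }
 rewrite E in A'. lra. Qed.

Lemma bout_self d x : (2 <= d)%nat -> Bout d x -> ip d x x >= 1 / (dR d * (dR d + 1)).
Proof. intros h [Hx Dx]. assert (2 <= dR d) by (apply dR_ge2; auto).
 rewrite (ip_center d) by auto.
 assert (0 <= sumN (Ndim d) (fun i => (x i - cpt d i) * (x i - cpt d i))) by (apply sumN_nonneg; intros; apply Rle_0_sqr).
 assert (1 / (dR d * (dR d + 1)) <= 1 / (dR d * dR d)).
 { unfold Rdiv. rewrite !Rmult_1_l. apply Rinv_le_contravar; nra. }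
 lra. Qed.


Lemma ip_ebasis d u k : (2 <= d)%nat -> (k < Ndim d)%nat ->
  ip d u (ebasis d k) = / (dR d + 1) * (u k + / dR d * sumN (Ndim d) u).
Proof. intros h hk. unfold ip, ebasis.
 rewrite (sumN_ext _ _ (fun i => / (dR d + 1) * ((if Nat.eqb k i then 1 else 0) * u i) + (/ (dR d + 1) * / dR d) * u i)).
 rewrite sumN_lin, sumN_ind by auto. ring.
 intros; ring. Qed.

Lemma sumN_ip1 d u : sumN (Ndim d) u = ip d u (fun _ => 1).
Proof. unfold ip. apply sumN_ext; intros; ring. Qed.

Lemma ebasis_sum d k : (2 <= d)%nat -> (k < Ndim d)%nat -> inH d (ebasis d k).
Proof. intros h hk. assert (2 <= dR d) by (apply dR_ge2; auto). unfold inH.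
 rewrite sumN_ip1, ip_sym, ip_ebasis by auto. rewrite sumN_const, INR_N. field. lra. Qed.

Lemma ebasis_simplex d k : (2 <= d)%nat -> (k < Ndim d)%nat -> Simplex d (ebasis d k).
Proof. intros h hk. assert (2 <= dR d) by (apply dR_ge2; auto). split.
 - intros i _. unfold ebasis. apply Rmult_le_pos. left; apply Rinv_0_lt_compat; lra.
   assert (0 < / dR d) by (apply Rinv_0_lt_compat; lra). destruct (Nat.eqb k i); lra.
 - apply ebasis_sum; auto. Qed.

Lemma ebasis_bout d k : (2 <= d)%nat -> (k < Ndim d)%nat -> Bout d (ebasis d k).
Proof. intros h hk. assert (2 <= dR d) by (apply dR_ge2; auto).
 pose proof (ebasis_sum d k h hk) as Hs. split; auto.
 rewrite dist_ip by auto. rewrite ip_ebasis by auto. rewrite Hs.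
 unfold ebasis. rewrite Nat.eqb_refl. unfold ro2. right. field. lra. Qed.

Lemma ebasis_ip_simplex d k p : (2 <= d)%nat -> (k < Ndim d)%nat -> Simplex d p ->
  ip d (ebasis d k) p >= 1 / (dR d * (dR d + 1)).
Proof. intros h hk [Hp Hs]. assert (2 <= dR d) by (apply dR_ge2; auto).
 rewrite ip_sym, ip_ebasis by auto. unfold inH in Hs. rewrite Hs.
 assert (0 <= p k) by auto.
 assert (E: 1 / (dR d * (dR d + 1)) = / (dR d + 1) * (0 + / dR d * 1)) by (field; lra).
 rewrite E. apply Rle_ge. apply Rmult_le_compat_l. left; apply Rinv_0_lt_compat; lra. lra. Qed.

Lemma bin_coord d b k : (2 <= d)%nat -> (k < Ndim d)%nat -> Bin d b -> 0 <= b k.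
Proof. intros h hk [Hb Db]. assert (2 <= dR d) by (apply dR_ge2; auto).
 set (c := 1 / (dR d * dR d)).
 set (x := fun i => b i - c).
 set (be := fun i => (if Nat.eqb k i then 1 else 0) - c).
 pose proof (CS (Ndim d) x be) as C.
 assert (Sx : sumN (Ndim d) x = 0).
 { unfold x. rewrite sumN_minus, sumN_const, INR_N. unfold inH in Hb. rewrite Hb. unfold c. field. lra. }
 assert (E1 : sumN (Ndim d) (fun i => x i * be i) = x k).
 { unfold be. rewrite (sumN_ext _ _ (fun i => 1 * ((if Nat.eqb k i then 1 else 0) * x i) + (- c) * x i)).
   rewrite sumN_lin, sumN_ind, Sx by auto. ring. intros; ring. }
 assert (E2 : sumN (Ndim d) (fun i => be i ^ 2) = 1 - c).
 { unfold be. rewrite (sumN_ext _ _ (fun i => (1 - 2 * c) * ((if Nat.eqb k i then 1 else 0) * 1) + c ^ 2 * 1)).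
   rewrite sumN_lin, sumN_ind, sumN_const, INR_N by auto. unfold c. field. lra.
   intros i _. destruct (Nat.eqb k i); ring. }
 rewrite E1, E2 in C.
 assert (Dx : sumN (Ndim d) (fun i => x i ^ 2) <= ri2 d) by exact Db.
 unfold ri2 in Dx.
 assert (0 < c) by (unfold c; apply Rdiv_lt_0_compat; nra).
 assert (c < 1) by (unfold c; apply (Rmult_lt_reg_r (dR d * dR d)); [nra|]; unfold Rdiv; rewrite Rmult_assoc, Rinv_l; nra).
 assert (x k ^ 2 <= c ^ 2).
 { eapply Rle_trans. apply C. 
   assert (E3: 1 / (dR d * dR d * (dR d * dR d - 1)) * (1 - c) = c ^ 2).
   { unfold c. field. split; nra. }
   rewrite <- E3. apply Rmult_le_compat_r; lra. }
 assert (- c <= x k) by nra.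
 unfold x in *. lra. Qed.

Lemma bin_simplex d b : (2 <= d)%nat -> Bin d b -> Simplex d b.
Proof. intros h Hb. split. intros; eapply bin_coord; eauto. apply Hb. Qed.

Lemma bin_bout' d b : (2 <= d)%nat -> Bin d b -> Bout d b.
Proof. intros h [Hb Db]. assert (2 <= dR d) by (apply dR_ge2; auto). split; auto.
 eapply Rle_trans. apply Db. unfold ri2, ro2.
 assert (E: 1 / (dR d * dR d * (dR d * dR d - 1)) = (dR d - 1) / (dR d * dR d * (dR d + 1)) * (/ ((dR d - 1) * (dR d - 1)))).
 { field. split; nra. }
 rewrite E. rewrite <- (Rmult_1_r ((dR d - 1) / (dR d * dR d * (dR d + 1)))) at 2.
 apply Rmult_le_compat_l. unfold Rdiv; apply Rmult_le_pos; [lra| left; apply Rinv_0_lt_compat; nra].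
 rewrite <- Rinv_1. apply Rinv_le_contravar; nra. Qed.


Lemma conv_single d (A : rset) u : A u -> conv d A u.
Proof. intros H. exists 1%nat, (fun _ => u), (fun _ => 1). split; [|split].
 - intros j _. split; auto; lra.
 - simpl; ring.
 - intros i _. simpl. ring. Qed.

Lemma sumN_wsum_ge n lam a r : (forall j, (j < n)%nat -> 0 <= lam j /\ a j >= r) ->
  sumN n (fun j => lam j * a j) >= sumN n lam * r.
Proof. intros H. rewrite Rmult_comm, <- sumN_scal. apply Rle_ge. apply sumN_le.
 intros j hj. destruct (H j hj). nra. Qed.

Lemma conv_ip d (A : rset) u v n x lam :
  (forall i, (i < Ndim d)%nat -> u i = sumN n (fun j => lam j * x j i)) ->
  ip d u v = sumN n (fun j => lam j * ip d (x j) v).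
Proof. intros H. unfold ip.
 rewrite (sumN_ext _ _ (fun i => sumN n (fun j => lam j * x j i * v i))).
 rewrite sumN_swap. apply sumN_ext. intros j _. rewrite <- sumN_scal. apply sumN_ext; intros; ring.
 intros i hi. rewrite H by auto. rewrite Rmult_comm, <- sumN_scal. apply sumN_ext; intros; ring. Qed.

Lemma conv_lower d (A : rset) v r u : (forall x, A x -> ip d x v >= r) -> conv d A u -> ip d u v >= r.
Proof. intros HA [n [x [lam [H1 [H2 H3]]]]]. rewrite (conv_ip d A u v n x lam H3).
 replace r with (sumN n lam * r) by (rewrite H2; ring). apply sumN_wsum_ge.
 intros j hj. destruct (H1 j hj). split; auto. Qed.

Lemma conv_sum d (A : rset) u : (forall x, A x -> inH d x) -> conv d A u -> inH d u.
Proof. intros HA Hc. unfold inH. apply Rle_antisym.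
 - assert (ip d u (fun _ => -1) >= -1).
   { apply (conv_lower d A); auto. intros x Ax. specialize (HA x Ax). unfold inH in HA.
     rewrite (sumN_ip1 d x) in HA. unfold ip in *. rewrite (sumN_ext _ _ (fun i => -1 * (x i * 1))).
     rewrite sumN_scal, HA. lra. intros; ring. }
   unfold ip in H. rewrite (sumN_ext _ _ (fun i => -1 * u i)) in H. rewrite sumN_scal in H. lra. intros; ring.
 - assert (ip d u (fun _ => 1) >= 1).
   { apply (conv_lower d A); auto. intros x Ax. specialize (HA x Ax). unfold inH in HA.
     rewrite (sumN_ip1 d x) in HA. lra. }
   rewrite <- sumN_ip1 in H. lra. Qed.

Lemma conv_simplex d (A : rset) u : (forall x, A x -> Simplex d x) -> conv d A u -> Simplex d u.
Proof. intros HA Hc. split.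
 - destruct Hc as [n [x [lam [H1 [H2 H3]]]]]. intros i hi. rewrite H3 by auto.
   apply sumN_nonneg. intros j hj. destruct (H1 j hj). apply Rmult_le_pos; auto. apply HA; auto.
 - apply (conv_sum d A); auto. intros; apply HA; auto. Qed.

Lemma sumN_split n m f : sumN (n + m) f = sumN n f + sumN m (fun j => f (n + j)%nat).
Proof. induction m. simpl. rewrite Nat.add_0_r; ring.
 rewrite Nat.add_succ_r. cbn [sumN]. rewrite IHm. ring. Qed.

Lemma conv_comb2 d (A : rset) x y tau : 0 <= tau <= 1 -> conv d A x -> conv d A y ->
  conv d A (fun i => (1 - tau) * x i + tau * y i).
Proof. intros Ht [n1 [x1 [l1 [A1 [B1 C1]]]]] [n2 [x2 [l2 [A2 [B2 C2]]]]].
 exists (n1 + n2)%nat, (fun j => if Nat.ltb j n1 then x1 j else x2 (j - n1)%nat),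
   (fun j => if Nat.ltb j n1 then (1 - tau) * l1 j else tau * l2 (j - n1)%nat).
 split; [|split].
 - intros j hj. destruct (Nat.ltb j n1) eqn:E.
   + apply Nat.ltb_lt in E. destruct (A1 j E). split; auto. nra.
   + apply Nat.ltb_ge in E. destruct (A2 (j - n1)%nat) as [P Q]. lia. split; auto. nra.
 - rewrite sumN_split.
   rewrite (sumN_ext n1 _ (fun j => (1 - tau) * l1 j)).
   rewrite (sumN_ext n2 _ (fun j => tau * l2 j)).
   rewrite !sumN_scal, B1, B2. ring.
   + intros j hj. replace (Nat.ltb (n1 + j) n1) with false. f_equal. f_equal. lia.
     symmetry; apply Nat.ltb_ge; lia.
   + intros j hj. replace (Nat.ltb j n1) with true. auto. symmetry; apply Nat.ltb_lt; lia.
 - intros i hi. cbv beta. rewrite C1, C2 by auto. rewrite sumN_split.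
   rewrite <- !sumN_scal. f_equal; apply sumN_ext.
   + intros j hj. replace (Nat.ltb j n1) with true. ring. symmetry; apply Nat.ltb_lt; lia.
   + intros j hj. replace (Nat.ltb (n1 + j) n1) with false. replace (n1 + j - n1)%nat with j by lia. ring.
     symmetry; apply Nat.ltb_ge; lia.
Qed.

Lemma closure_lower d (P : rset) v r u : (forall w, P w -> ip d w v >= r) -> closure d P u -> ip d u v >= r.
Proof. intros HP Hc. apply Rnot_lt_ge. intro Hlt.
 set (de := r - ip d u v). set (V := sumN (Ndim d) (fun i => v i ^ 2)).
 assert (HV : 0 <= V) by (apply sumN_nonneg; intros; apply pow2_ge_0).
 assert (Hde : 0 < de) by (unfold de; lra).
 destruct (Hc (de ^ 2 / (V + 1))) as [w [Pw Dw]].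
 { apply Rdiv_lt_0_compat; nra. }
 pose proof (CS (Ndim d) (fun i => u i - w i) v) as C. cbv beta in C.
 assert (E: sumN (Ndim d) (fun i => (u i - w i) * v i) = ip d u v - ip d w v).
 { unfold ip. rewrite <- sumN_minus. apply sumN_ext; intros; ring. }
 rewrite E in C. fold V in C. rewrite <- dist2_eq in C.
 specialize (HP w Pw).
 assert (ip d w v - ip d u v >= de) by (unfold de; lra).
 assert (de ^ 2 <= dist2 d u w * V) by nra.
 assert (dist2 d u w * V <= de ^ 2 / (V + 1) * V).
 { apply Rmult_le_compat_r; auto. lra. }
 assert (de ^ 2 / (V + 1) * V < de ^ 2).
 { apply (Rmult_lt_reg_r (V + 1)). lra. unfold Rdiv.
   replace (de ^ 2 * / (V + 1) * V * (V + 1)) with (de ^ 2 * V) by (field; lra). nra. }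
 lra. Qed.

Lemma closure_sum d (P : rset) u : (forall w, P w -> inH d w) -> closure d P u -> inH d u.
Proof. intros HP Hc. unfold inH. apply Rle_antisym.
 - assert (ip d u (fun _ => -1) >= -1).
   { apply (closure_lower d P); auto. intros x Ax. specialize (HP x Ax). unfold inH in HP.
     rewrite (sumN_ip1 d x) in HP. unfold ip in *. rewrite (sumN_ext _ _ (fun i => -1 * (x i * 1))).
     rewrite sumN_scal, HP. lra. intros; ring. }
   unfold ip in H. rewrite (sumN_ext _ _ (fun i => -1 * u i)) in H. rewrite sumN_scal in H. lra. intros; ring.
 - assert (ip d u (fun _ => 1) >= 1).
   { apply (closure_lower d P); auto. intros x Ax. specialize (HP x Ax). unfold inH in HP.
     rewrite (sumN_ip1 d x) in HP. lra. }
   rewrite <- sumN_ip1 in H. lra. Qed.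

Lemma closure_incl d (P : rset) u : P u -> closure d P u.
Proof. intros H eps He. exists u. split; auto. unfold dist2.
 rewrite (sumN_ext _ _ (fun _ => 0)). rewrite sumN_const. lra. intros; ring. Qed.


Lemma polar_bout d v : (2 <= d)%nat -> inH d v ->
  (forall b, Bin d b -> ip d v b >= 1 / (dR d * (dR d + 1))) -> Bout d v.
Proof. intros h Hv HB. assert (2 <= dR d) by (apply dR_ge2; auto). split; auto.
 set (D := dist2 d v (cpt d)). set (c := 1 / (dR d * dR d)).
 assert (HD0 : 0 <= D) by (unfold D, dist2; apply sumN_nonneg; intros; apply pow2_ge_0).
 assert (Hro : 0 < ro2 d) by (unfold ro2; apply Rdiv_lt_0_compat; nra).
 assert (Hri : 0 < ri2 d).
 { unfold ri2; apply Rdiv_lt_0_compat. lra. assert (0 < dR d * dR d) by nra. assert (0 < dR d * dR d - 1) by nra. apply Rmult_lt_0_compat; auto. }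
 destruct (Rle_dec D (ro2 d)) as [ok|nok]; auto. exfalso.
 assert (DP : 0 < D) by lra.
 set (mu := sqrt (ri2 d / D)).
 assert (Hmu2 : mu * mu = ri2 d / D) by (unfold mu; apply sqrt_sqrt; left; apply Rdiv_lt_0_compat; lra).
 assert (Hmu0 : 0 <= mu) by (unfold mu; apply sqrt_pos).
 set (b := fun i => c - mu * (v i - c)).
 assert (Hb : inH d b).
 { unfold inH, b. rewrite (sumN_ext _ _ (fun i => (c + mu * c) * 1 + (- mu) * v i)).
   rewrite sumN_lin, sumN_const, INR_N. unfold inH in Hv. rewrite Hv. unfold c. field. lra. intros; ring. }
 assert (HbB : Bin d b).
 { split; auto. unfold dist2, b, cpt. fold c.
   rewrite (sumN_ext _ _ (fun i => mu ^ 2 * (v i - c) ^ 2)).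
   rewrite sumN_scal. change (sumN (Ndim d) (fun i => (v i - c) ^ 2)) with D. right.
   replace (mu ^ 2) with (mu * mu) by ring. rewrite Hmu2. field. lra. intros; unfold c; ring. }
 specialize (HB b HbB).
 assert (E : ip d v b = c - mu * D).
 { unfold ip, b. rewrite (sumN_ext _ _ (fun i => (c + mu * c) * v i + (- mu) * (v i * v i))).
   rewrite sumN_lin. unfold inH in Hv. rewrite Hv. unfold D. rewrite dist_ip by auto. unfold ip. fold c. ring.
   intros; ring. }
 rewrite E in HB.
 assert (Hs : mu * D <= 1 / (dR d * dR d * (dR d + 1))).
 { assert (c - 1 / (dR d * (dR d + 1)) = 1 / (dR d * dR d * (dR d + 1))) by (unfold c; field; lra). lra. }
 assert (Hsq : (mu * D) ^ 2 <= (1 / (dR d * dR d * (dR d + 1))) ^ 2).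
 { apply pow_incr. split; auto. apply Rmult_le_pos; lra. }
 replace ((mu * D) ^ 2) with ((mu * mu) * D * D) in Hsq by ring. rewrite Hmu2 in Hsq.
 replace (ri2 d / D * D * D) with (ri2 d * D) in Hsq by (field; lra).
 assert (E2 : (1 / (dR d * dR d * (dR d + 1))) ^ 2 = ri2 d * ro2 d).
 { unfold ri2, ro2. field. split; nra. }
 rewrite E2 in Hsq. 
 assert (D <= ro2 d). { apply (Rmult_le_reg_l (ri2 d)); auto. }
 lra. Qed.

Lemma polar_simplex d v : (2 <= d)%nat -> inH d v ->
  (forall k, (k < Ndim d)%nat -> ip d v (ebasis d k) >= 1 / (dR d * (dR d + 1))) -> Simplex d v.
Proof. intros h Hv HB. assert (2 <= dR d) by (apply dR_ge2; auto). split; auto.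
 intros i hi. specialize (HB i hi). rewrite ip_ebasis in HB by auto. unfold inH in Hv. rewrite Hv in HB.
 assert (E: 1 / (dR d * (dR d + 1)) = / (dR d + 1) * (/ dR d * 1)) by (field; lra).
 rewrite E in HB. apply Rge_le in HB. apply Rmult_le_reg_l in HB. lra. apply Rinv_0_lt_compat; lra. Qed.

Lemma germ_sub d A p : (2 <= d)%nat -> germ d A -> A p -> Simplex d p /\ Bout d p.
Proof. intros h [HS HP] Ap. assert (2 <= dR d) by (apply dR_ge2; auto).
 pose proof (HS p Ap) as Sp. split; auto. split. apply Sp.
 rewrite dist_ip by (auto; apply Sp). destruct (HP p p Ap Ap) as [_ U]. unfold ro2.
 assert (2 / (dR d * (dR d + 1)) - 1 / (dR d * dR d) = (dR d - 1) / (dR d * dR d * (dR d + 1))) by (field; lra).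
 lra. Qed.

Lemma germ_add d (A : rset) x : (2 <= d)%nat -> germ d A -> Simplex d x -> Bout d x ->
  (forall p, A p -> ip d x p >= 1 / (dR d * (dR d + 1))) -> germ d (fun y => A y \/ y = x).
Proof. intros h HA Sx Bx Hx. split.
 - intros y [Ay| ->]; auto. apply HA; auto.
 - intros p s Hp Hs.
   destruct Hp as [Ap| ->]; destruct Hs as [As| ->].
   + apply HA; auto.
   + split. rewrite ip_sym. apply Rge_le, Hx; auto. apply bout_bout; auto. apply (germ_sub d A); auto.
   + split. apply Rge_le, Hx; auto. apply bout_bout; auto. apply (germ_sub d A); auto.
   + split. apply Rge_le, bout_self; auto. apply bout_bout; auto. Qed.

Lemma germ_eq d (A B : rset) : seteq A B -> germ d A -> germ d B.
Proof. intros E [H1 H2]. split. intros u Bu. apply H1, E, Bu.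
 intros p s Bp Bs. apply H2; apply E; auto. Qed.

Lemma inH_ext d u v : (forall i, (i < Ndim d)%nat -> u i = v i) -> inH d u -> inH d v.
Proof. unfold inH. intros E H. rewrite <- H. symmetry. apply sumN_ext; auto. Qed.

Lemma ip_ext d u v w : (forall i, (i < Ndim d)%nat -> u i = v i) -> ip d u w = ip d v w.
Proof. unfold ip. intros E. apply sumN_ext. intros i hi; rewrite E; auto. Qed.

Lemma basis_lower d x p : (2 <= d)%nat -> isBasisVec d x -> Simplex d p -> ip d x p >= 1 / (dR d * (dR d + 1)).
Proof. intros h [k [hk E]] Sp. rewrite (ip_ext d x (ebasis d k)) by auto. apply ebasis_ip_simplex; auto. Qed.

Lemma basis_inH d x : (2 <= d)%nat -> isBasisVec d x -> inH d x.
Proof. intros h [k [hk E]]. apply (inH_ext d (ebasis d k)). intros; symmetry; auto. apply ebasis_sum; auto. Qed.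

Lemma basis_simplex_simplex d u : (2 <= d)%nat -> BasisSimplex d u -> Simplex d u.
Proof. intros h H. apply (conv_simplex d (isBasisVec d)); auto.
 intros x [k [hk E]]. pose proof (ebasis_simplex d k h hk) as [S1 S2]. split.
 intros i hi. rewrite E; auto. apply (inH_ext d (ebasis d k)); auto. intros; symmetry; auto. Qed.

Lemma basis_simplex_lower d u p : (2 <= d)%nat -> BasisSimplex d u -> Simplex d p -> ip d u p >= 1 / (dR d * (dR d + 1)).
Proof. intros h H Sp. apply (conv_lower d (isBasisVec d)); auto. intros; apply basis_lower; auto. Qed.


Lemma zorn_pred (T : Type) (P : (T -> Prop) -> Prop) :
  (forall F : (T -> Prop) -> Prop, (forall X, F X -> P X) ->
     (forall X Y, F X -> F Y -> (forall u, X u -> Y u) \/ (forall u, Y u -> X u)) ->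
     P (fun u => exists X, F X /\ X u)) ->
  exists A, P A /\ forall B, (forall u, A u -> B u) -> P B -> forall u, B u -> A u.
Proof.
intros H.
destruct (@classical_sets.Zorn_bigcup T P) as [A [PA HA]].
- intros F FP tot. 
  assert (E : classical_sets.bigcup F (fun X => X) = (fun u => exists X, F X /\ X u)).
  { apply functional_extensionality; intro u. apply propositional_extensionality.
    unfold classical_sets.bigcup. simpl. split.
    - intros [X FX Xu]. exists X; split; assumption.
    - intros [X [FX Xu]]. exists X; assumption. }
  rewrite E. apply H. exact FP. intros X Y FX FY. destruct (tot X Y FX FY); [left|right]; assumption.
- exists A; split; auto. intros B AB PB u Bu.
  apply NNPP; intro nAu. apply (HA B); auto. split. exact AB. intro BA. apply nAu. apply BA. exact Bu.
Qed.

Lemma max_germ d (G : rset) : (2 <= d)%nat -> germ d G ->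
  exists M, germ d M /\ subset G M /\ (forall x, germ d (fun y => M y \/ y = x) -> M x).
Proof. intros h HG.
 destruct (zorn_pred vec (fun X => germ d (union X G))) as [A [PA HA]].
 - intros F FP tot. split.
   + intros u [[X [FX Xu]] | Gu]. apply (FP X FX). left; auto. apply HG; auto.
   + intros p s Hp Hs.
     destruct Hp as [[X [FX Xp]] | Gp]; destruct Hs as [[Y [FY Ys]] | Gs].
     * destruct (tot X Y FX FY) as [XY|YX].
       -- apply (FP Y FY); left; auto.
       -- apply (FP X FX); left; auto.
     * apply (FP X FX); [left|right]; auto.
     * apply (FP Y FY); [right|left]; auto.
     * apply HG; auto.
 - exists (union A G). split; [|split]; auto.
   + intros u Gu; right; auto.
   + intros x Hx.
     assert (PB : germ d (union (fun u => A u \/ u = x) G)).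
     { apply (germ_eq d (fun y => union A G y \/ y = x)); auto.
       intros y; unfold union; tauto. }
     left. apply (HA (fun u => A u \/ u = x)); auto. Qed.

Lemma max_qplex d (M : rset) : (2 <= d)%nat -> germ d M ->
  (forall x, germ d (fun y => M y \/ y = x) -> M x) -> qplex d M.
Proof. intros h HM Hmax. split.
 - intros u Mu. apply (germ_sub d M); auto.
 - intros u. split.
   + intros [Hu Pu].
     assert (Eb : forall k, (k < Ndim d)%nat -> M (ebasis d k)).
     { intros k hk. apply Hmax. apply germ_add; auto. apply ebasis_simplex; auto. apply ebasis_bout; auto.
       intros p Mp. apply ebasis_ip_simplex; auto. apply (germ_sub d M); auto. }
     assert (Bb : forall b, Bin d b -> M b).
     { intros b Hb. apply Hmax. apply germ_add; auto. apply bin_simplex; auto. apply bin_bout'; auto.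
       intros p Mp. apply bin_bout; auto. apply (germ_sub d M); auto. }
     assert (Su : Simplex d u). { apply polar_simplex; auto. }
     assert (Bu : Bout d u). { apply polar_bout; auto. }
     apply Hmax. apply germ_add; auto.
   + intros Mu. split. apply (germ_sub d M); auto.
     intros v Mv. apply Rle_ge. apply HM; auto. Qed.

Lemma exists_qplex d (G : rset) : (2 <= d)%nat -> germ d G -> exists Q, qplex d Q /\ subset G Q.
Proof. intros h HG. destruct (max_germ d G h HG) as [M [HM [GM Hmax]]].
 exists M. split; auto. apply max_qplex; auto. Qed.

Lemma exists_qplex_with d (G : rset) x : (2 <= d)%nat -> germ d G -> Simplex d x -> Bout d x -> polar d G x ->
  exists Q, qplex d Q /\ subset G Q /\ Q x.
Proof. intros h HG Sx Bx [_ Px].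
 destruct (exists_qplex d (fun y => G y \/ y = x)) as [Q [HQ GQ]]; auto.
 apply germ_add; auto.
 exists Q. split; auto. split. intros u Gu; apply GQ; left; auto. apply GQ; right; auto. Qed.

Lemma qplex_ip d Q u v : qplex d Q -> Q u -> Q v -> ip d u v >= 1 / (dR d * (dR d + 1)).
Proof. intros [_ E] Qu Qv. apply E in Qu. destruct Qu as [_ P]. apply P; auto. Qed.

Lemma qplex_simplex d Q u : qplex d Q -> Q u -> Simplex d u.
Proof. intros [S _] Qu. apply S; auto. Qed.

Lemma qplex_contains d Q u : (2 <= d)%nat -> qplex d Q -> (BasisSimplex d u \/ Bin d u) -> Q u.
Proof. intros h HQ Hu. destruct HQ as [S E]. apply E. split.
 - destruct Hu as [Hu|Hu]. apply basis_simplex_simplex; auto. apply Hu.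
 - intros p Qp. destruct (S p Qp) as [Sp Bp]. destruct Hu as [Hu|Hu].
   apply basis_simplex_lower; auto. apply bin_bout; auto. Qed.

Lemma qplex_clconv d Q (A : rset) : qplex d Q -> subset A Q -> subset (clconv d A) Q.
Proof. intros HQ AQ u Hu. destruct HQ as [S E]. apply E. split.
 - apply (closure_sum d (conv d A)); auto. intros w Hw. apply (conv_sum d A); auto.
   intros x Ax. apply (S x (AQ x Ax)).
 - intros p Qp. apply (closure_lower d (conv d A)); auto. intros w Hw.
   apply (conv_lower d A); auto. intros x Ax. apply (qplex_ip d Q); auto. split; auto. Qed.


Lemma not_closure d (P : rset) u : ~ closure d P u -> exists eps, 0 < eps /\ forall v, P v -> dist2 d u v >= eps.
Proof. intros H. apply NNPP. intro H2. apply H. intros eps He. apply NNPP. intro H3. apply H2.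
 exists eps. split; auto. intros v Pv. apply Rnot_lt_ge. intro Hl. apply H3. exists v; auto. Qed.

Lemma simplex_diff_sq d w w0 : Simplex d w -> Simplex d w0 -> sumN (Ndim d) (fun i => (w i - w0 i) ^ 2) <= 4.
Proof. intros [P1 S1] [P2 S2]. eapply Rle_trans.
 apply (sumN_le _ _ (fun i => (w i + w0 i) ^ 2)). intros i hi. specialize (P1 i hi). specialize (P2 i hi). nra.
 eapply Rle_trans. apply sumN_sq_le. intros i hi. specialize (P1 i hi). specialize (P2 i hi). lra.
 rewrite sumN_plus. unfold inH in S1, S2. rewrite S1, S2. lra. Qed.

Lemma sep_core d (A : rset) u : (2 <= d)%nat -> (forall x, A x -> Simplex d x) -> inH d u ->
  ~ closure d (conv d A) u -> (exists w, conv d A w) ->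
  exists a beta, sumN (Ndim d) a = 0 /\ (forall w, conv d A w -> ip d a w <= beta) /\ beta < ip d a u.
Proof. intros h HA Hu Hn [w1 Hw1].
 destruct (not_closure d _ u Hn) as [eps [He Heps]].
 set (E := fun r => exists w, conv d A w /\ r = - dist2 d u w).
 destruct (completeness E) as [m [Hub Hlub]].
 { exists (- eps). intros r [w [Hw ->]]. specialize (Heps w Hw). lra. }
 { exists (- dist2 d u w1). exists w1; auto. }
 set (de := - m).
 assert (Hge : forall w, conv d A w -> dist2 d u w >= de).
 { intros w Hw. assert (- dist2 d u w <= m) by (apply Hub; exists w; auto). unfold de; lra. }
 assert (Hde : eps <= de).
 { assert (m <= - eps). { apply Hlub. intros r [w [Hw ->]]. specialize (Heps w Hw). lra. } unfold de; lra. }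
 set (tau := de / (8 + de)).
 assert (Htau : 0 < tau) by (unfold tau; apply Rdiv_lt_0_compat; lra).
 assert (Htau1 : tau * (8 + de) = de) by (unfold tau; field; lra).
 set (eta := tau * de / 2).
 assert (Heta : 0 < eta) by (unfold eta; nra).
 assert (Hw0 : exists w0, conv d A w0 /\ dist2 d u w0 < de + eta).
 { apply NNPP. intro H. assert (m <= - de - eta).
   { apply Hlub. intros r [w [Hw ->]]. apply Rnot_lt_le. intro Hl. apply H. exists w. split; auto. lra. }
   unfold de in *. lra. }
 destruct Hw0 as [w0 [Cw0 Dw0]].
 assert (Sw0 : Simplex d w0) by (apply (conv_simplex d A); auto).
 set (a := fun i => u i - w0 i).
 exists a, (ip d a w0 + de / 2). split; [|split].
 - unfold a. rewrite sumN_minus. unfold inH in Hu. rewrite Hu. destruct Sw0 as [_ S]. unfold inH in S. rewrite S. ring.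
 - intros w Hw.
   assert (Sw : Simplex d w) by (apply (conv_simplex d A); auto).
   assert (Cwt : conv d A (fun i => (1 - tau) * w0 i + tau * w i)).
   { apply conv_comb2; auto. split; [lra|]. unfold tau. apply (Rmult_le_reg_r (8 + de)). lra.
     unfold Rdiv. rewrite Rmult_assoc, Rinv_l by lra. lra. }
   specialize (Hge _ Cwt).
   set (B2 := sumN (Ndim d) (fun i => (w i - w0 i) ^ 2)).
   set (AB := sumN (Ndim d) (fun i => a i * (w i - w0 i))).
   assert (HB2 : B2 <= 4) by (apply simplex_diff_sq; auto).
   assert (Eq : dist2 d u (fun i => (1 - tau) * w0 i + tau * w i) = dist2 d u w0 - 2 * tau * AB + tau ^ 2 * B2).
   { unfold dist2, AB, B2, a. generalize (Ndim d). intros n. induction n; cbn [sumN]. ring. rewrite IHn. ring. }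
   rewrite Eq in Hge.
   assert (HAB : AB < de / 2).
   { assert (2 * tau * AB < tau * (de / 2 + 4 * tau)) by (unfold eta in Dw0; nra).
     assert (AB < de / 4 + 2 * tau) by nra.
     assert (8 * tau <= de) by nra. lra. }
   assert (ip d a w = ip d a w0 + AB).
   { unfold ip, AB. rewrite <- sumN_plus. apply sumN_ext; intros; ring. }
   lra.
 - assert (ip d a u = ip d a w0 + dist2 d u w0).
   { unfold ip, dist2, a. rewrite <- sumN_plus. apply sumN_ext; intros; ring. }
   specialize (Hge w0 Cw0). lra.
Qed.


Lemma cpt_bin d : (2 <= d)%nat -> Bin d (cpt d).
Proof. intros h. assert (2 <= dR d) by (apply dR_ge2; auto). split.
 - unfold inH, cpt. rewrite sumN_const, INR_N. field. lra.
 - unfold dist2. rewrite (sumN_ext _ _ (fun _ => 0)). rewrite sumN_const. unfold ri2.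
   rewrite Rmult_0_r. unfold Rdiv. apply Rmult_le_pos. lra. left. apply Rinv_0_lt_compat.
   assert (0 < dR d * dR d) by nra. assert (0 < dR d * dR d - 1) by nra. apply Rmult_lt_0_compat; auto.
   intros; ring. Qed.

Lemma ebasis_BS d k : (2 <= d)%nat -> (k < Ndim d)%nat -> BasisSimplex d (ebasis d k).
Proof. intros h hk. apply conv_single. exists k. split; auto. Qed.

Lemma sep_v d (G : rset) u : (2 <= d)%nat -> germ d G -> inH d u ->
  ~ clconv d (union (union (BasisSimplex d) (Bin d)) G) u ->
  exists v, Simplex d v /\ Bout d v /\ polar d G v /\ ip d v u < 1 / (dR d * (dR d + 1)).
Proof. intros h HG Hu Hn. assert (2 <= dR d) by (apply dR_ge2; auto).
 set (A := union (union (BasisSimplex d) (Bin d)) G).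
 assert (HA : forall x, A x -> Simplex d x).
 { intros x [[Hx|Hx]|Hx]. apply basis_simplex_simplex; auto. apply bin_simplex; auto. apply HG; auto. }
 assert (Cc : conv d A (cpt d)) by (apply conv_single; left; right; apply cpt_bin; auto).
 destruct (sep_core d A u h HA Hu Hn (ex_intro _ _ Cc)) as [a [beta [Sa [Hle Hlt]]]].
 set (c := 1 / (dR d * dR d)).
 set (s := 1 / (dR d * dR d * (dR d + 1))).
 assert (Hs : 0 < s) by (unfold s; apply Rdiv_lt_0_compat; nra).
 assert (Ets : c - s = 1 / (dR d * (dR d + 1))) by (unfold c, s; field; lra).
 assert (Hac : ip d a (cpt d) = 0).
 { unfold ip, cpt. rewrite (sumN_ext _ _ (fun i => c * a i)). rewrite sumN_scal, Sa. ring.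
   intros; unfold c; ring. }
 assert (Hb0 : 0 <= beta) by (rewrite <- Hac; apply Hle; auto).
 set (ga := ip d a u).
 set (lam := 2 * s / (beta + ga)).
 assert (Hlam : 0 < lam) by (unfold lam; apply Rdiv_lt_0_compat; unfold ga in *; lra).
 assert (L1 : lam * beta < s).
 { unfold lam. apply (Rmult_lt_reg_r (beta + ga)). unfold ga in *; lra.
   replace (2 * s / (beta + ga) * beta * (beta + ga)) with (2 * s * beta) by (field; unfold ga in *; lra). unfold ga in *; nra. }
 assert (L2 : s < lam * ga).
 { unfold lam. apply (Rmult_lt_reg_r (beta + ga)). unfold ga in *; lra.
   replace (2 * s / (beta + ga) * ga * (beta + ga)) with (2 * s * ga) by (field; unfold ga in *; lra). unfold ga in *; nra. }
 set (v := fun i => c - lam * a i).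
 assert (Hipv : forall w, inH d w -> ip d v w = c - lam * ip d a w).
 { intros w Hw. unfold ip, v. rewrite (sumN_ext _ _ (fun i => c * w i + (- lam) * (a i * w i))).
   rewrite sumN_lin. unfold inH in Hw. rewrite Hw. ring. intros; ring. }
 assert (Hv : inH d v).
 { unfold inH, v. rewrite (sumN_ext _ _ (fun i => c * 1 + (- lam) * a i)). rewrite sumN_lin, sumN_const, Sa, INR_N.
   unfold c. field. lra. intros; ring. }
 assert (Hpol : forall w, conv d A w -> ip d v w >= 1 / (dR d * (dR d + 1))).
 { intros w Hw. assert (inH d w). { apply (conv_sum d A); auto. intros; apply HA; auto. }
   rewrite Hipv by auto. specialize (Hle w Hw).
   assert (lam * ip d a w <= lam * beta) by (apply Rmult_le_compat_l; lra). lra. }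
 exists v. split; [|split; [|split]].
 - apply polar_simplex; auto. intros k hk. apply Hpol. apply conv_single. left; left. apply ebasis_BS; auto.
 - apply polar_bout; auto. intros b Hb. apply Hpol. apply conv_single. left; right; auto.
 - split; auto. intros g Hg. apply Hpol. apply conv_single. right; auto.
 - rewrite Hipv by auto. fold ga. lra.
Qed.

Lemma clconv_ext d (A B : rset) : seteq A B -> seteq (clconv d A) (clconv d B).
Proof. assert (M : forall A B : rset, subset A B -> subset (clconv d A) (clconv d B)).
 { intros A0 B0 AB u Hu eps He. destruct (Hu eps He) as [w [[n [x [lam [H1 H2]]]] Dw]].
   exists w. split; auto. exists n, x, lam. split; auto. intros j hj. destruct (H1 j hj). split; auto. }
 intros E u. split; apply M; intros x Hx; apply E; auto. Qed.

Theorem mainTheorem4 (d : nat) (G : rset) :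
  (2 <= d)%nat -> germ d G ->
  (exists Q, qplex d Q /\ subset G Q) /\
  seteq (stem d G)
        (clconv d (union (union (BasisSimplex d) (Bin d)) G)) /\
  seteq (envelope d G)
        (fun u => Simplex d u /\ Bout d u /\ polar d G u) /\
  seteq (polar d (stem d G)) (envelope d G) /\
  seteq (polar d (envelope d G)) (stem d G) /\
  seteq (stem d (emptyset)) (clconv d (union (BasisSimplex d) (Bin d))) /\
  seteq (envelope d (emptyset)) (fun u => Simplex d u /\ Bout d u).
Proof.
 assert (MAIN : forall G, (2 <= d)%nat -> germ d G ->
  (exists Q, qplex d Q /\ subset G Q) /\
  seteq (stem d G)
        (clconv d (union (union (BasisSimplex d) (Bin d)) G)) /\
  seteq (envelope d G)
        (fun u => Simplex d u /\ Bout d u /\ polar d G u) /\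
  seteq (polar d (stem d G)) (envelope d G) /\
  seteq (polar d (envelope d G)) (stem d G)).
 { clear G. intros G h HG.
   destruct (exists_qplex d G h HG) as [Q0 [HQ0 GQ0]].
   set (K := clconv d (union (union (BasisSimplex d) (Bin d)) G)).
   assert (KQ : forall Q, qplex d Q -> subset G Q -> subset K Q).
   { intros Q HQ GQ. apply qplex_clconv; auto. intros x [[Hx|Hx]|Hx].
     apply (qplex_contains d); auto. apply (qplex_contains d); auto. apply GQ; auto. }
   assert (Henv : seteq (envelope d G) (fun u => Simplex d u /\ Bout d u /\ polar d G u)).
   { intros u. split.
     - intros [Q [HQ [GQ Qu]]]. destruct HQ as [S E]. destruct (S u Qu) as [Su Bu].
       split; auto. split; auto. split. apply Su. intros g Gg. apply (qplex_ip d Q); auto. split; auto.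
     - intros [Su [Bu Pu]]. destruct (exists_qplex_with d G u h HG Su Bu Pu) as [Q [HQ [GQ Qu]]].
       exists Q; auto. }
   assert (Hstem : seteq (stem d G) K).
   { intros u. split.
     - intros Su. apply NNPP. intro nK.
       destruct (qplex_simplex d Q0 u HQ0 (Su Q0 HQ0 GQ0)) as [_ Hu].
       destruct (sep_v d G u h HG Hu nK) as [v [Sv [Bv [Pv Lv]]]].
       destruct (exists_qplex_with d G v h HG Sv Bv Pv) as [Q [HQ [GQ Qv]]].
       assert (Qu : Q u) by (apply Su; auto).
       pose proof (qplex_ip d Q v u HQ Qv Qu). lra.
     - intros Ku Q HQ GQ. apply (KQ Q); auto. }
   split; [exists Q0; auto|]. split; auto. split; auto. split.
   - intros v. split.
     + intros [Hv Pv]. apply Henv.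
       assert (Pv' : forall w, K w -> ip d v w >= 1 / (dR d * (dR d + 1))).
       { intros w Kw. apply Pv. apply Hstem; auto. }
       assert (Kin : forall w, union (union (BasisSimplex d) (Bin d)) G w -> K w).
       { intros w Hw. apply closure_incl. apply conv_single; auto. }
       split; [|split].
       * apply polar_simplex; auto. intros k hk. apply Pv', Kin. left; left. apply ebasis_BS; auto.
       * apply polar_bout; auto. intros b Hb. apply Pv', Kin. left; right; auto.
       * split; auto. intros g Gg. apply Pv', Kin. right; auto.
     + intros [Q [HQ [GQ Qv]]]. split. apply (qplex_simplex d Q v HQ Qv).
       intros w Sw. apply (qplex_ip d Q); auto. apply Sw; auto.
   - intros u. split.
     + intros [Hu Pu]. apply Hstem. apply NNPP. intro nK.
       destruct (sep_v d G u h HG Hu nK) as [v [Sv [Bv [Pv Lv]]]].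
       assert (Ev : envelope d G v) by (apply Henv; auto).
       specialize (Pu v Ev). rewrite ip_sym in Pu. lra.
     + intros Su. split. apply (qplex_simplex d Q0 u HQ0 (Su Q0 HQ0 GQ0)).
       intros v [Q [HQ [GQ Qv]]]. apply (qplex_ip d Q); auto. apply Su; auto. }
 intros h HG.
 assert (H0 : germ d emptyset).
 { split. intros u []. intros p s []. }
 destruct (MAIN G h HG) as [A1 [A2 [A3 [A4 A5]]]].
 destruct (MAIN emptyset h H0) as [B1 [B2 [B3 [B4 B5]]]].
 split; auto. split; auto. split; auto. split; auto. split; auto. split.
 - intros u. specialize (B2 u). assert (C := clconv_ext d (union (union (BasisSimplex d) (Bin d)) emptyset) (union (BasisSimplex d) (Bin d))).
   assert (C' := C ltac:(intros w; unfold union, emptyset; tauto) u). tauto.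
 - intros u. specialize (B3 u). split. intros Hu. apply B3 in Hu. tauto.
   intros [Su Bu]. apply B3. split; auto. split; auto. split. apply Su. intros v [].
Qed.
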